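(* Let $p$ be a prime, let $n\ge 0$ and $k\ge 0$ be integers, and let $a\in\mathbb{Z}_p$. For $x=a+p^n u$ with $u$ a variable, $\delta^k x$ is a polynomial in $u$ with coefficients in $\mathbb{Q}_p$ of degree at most $p^k$; write $\delta^k(a+p^n u)=\sum_{j=0}^{p^k} c^k_{a,j}u^j$ with $c^k_{a,j}\in\mathbb{Q}_p$. Then: (1) $|c^k_{a,0}|_p\le 1$; (2) $|c^k_{a,1}|_p=p^{-(n-k)}$; (3) $|c^k_{a,j}|_p\le p^{-((n-k+1)j-1)}$ for $2\le j\le p^k$.
   Context: $\mathbb{Q}_p$ is the field of $p$-adic numbers with $p$-adic norm $|\cdot|_p$ normalized by $|p|_p=p^{-1}$, and $\mathbb{Z}_p=\{x\in\mathbb{Q}_p:|x|_p\le 1\}$. The operator $\delta$ is the Fermat quotient operator $\delta y=(y-y^p)/p$, applied formally to polynomials in $u$ with $\mathbb{Q}_p$-coefficients, and $\delta^k$ is its $k$-th iterate ($\delta^0$ is the identity). *)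

(* Defs.v *)
(* No p-adic library is installed, so Q_p is pinned down
   axiomatically (up to isometric isomorphism) as a field K with an
   absolute value that is non-archimedean, normalized by |p| = 1/p,
   complete, and in which Q is dense.  Any such (K, abs) is isometrically
   isomorphic to (Q_p, |.|_p) (Ostrowski + uniqueness of completions);
   Q_p itself is such a model. *)
From mathcomp Require Import all_boot all_order all_algebra.
Set Implicit Arguments. Unset Strict Implicit. Unset Printing Implicit Defensive.
Import Order.TTheory GRing.Theory Num.Theory.
Local Open Scope ring_scope.

Record is_Qp_model (p : nat) (K : fieldType) (abs : K -> rat) : Prop := {
  abs_ge0   : forall x, 0 <= abs x;
  abs_eq0   : forall x, abs x = 0 <-> x = 0;
  absM      : forall x y, abs (x * y) = abs x * abs y;
  abs_ultra : forall x y, abs (x + y) <= Num.max (abs x) (abs y);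
  abs_p     : abs (p%:R) = (p%:Q)^-1;
  Q_dense   : forall (x : K) (e : rat), 0 < e ->
                exists q : rat, abs (x - ratr q) < e;
  complete  : forall u : nat -> K,
                (forall e : rat, 0 < e -> exists N : nat, forall m l : nat,
                   (N <= m)%N -> (N <= l)%N -> abs (u m - u l) < e) ->
                exists L : K, forall e : rat, 0 < e -> exists N : nat,
                   forall m : nat, (N <= m)%N -> abs (u m - L) < e }.

Definition fermat_delta (p : nat) (K : fieldType) (y : {poly K}) : {poly K} :=
  (p%:R)^-1 *: (y - y ^+ p).

Definition delta_iter (p : nat) (K : fieldType) (k n : nat) (a : K) : {poly K} :=
  iter k (@fermat_delta p K) (a%:P + (p ^ n)%:R *: 'X).

Arguments is_Qp_model : clear implicits.

(* Main.v *)
Require Import Defs.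
From mathcomp Require Import all_boot all_order all_algebra.
From mathcomp Require Import zify ring lra.

Import Order.TTheory GRing.Theory Num.Theory.
Local Open Scope ring_scope.

Section Proof.
Variables (p : nat) (K : fieldType) (abs : K -> rat).
Hypothesis Hp : prime p.
Hypothesis HK : is_Qp_model p K abs.

Local Notation pq := (p%:Q).

Lemma p_gt1 : (1 < p)%N. Proof. exact: prime_gt1. Qed.
Lemma pq_gt1 : 1 < pq. Proof. by rewrite ltr1n p_gt1. Qed.
Lemma pq_gt0 : 0 < pq. Proof. exact: lt_trans ltr01 pq_gt1. Qed.
Lemma pq_neq0 : pq != 0. Proof. exact: lt0r_neq0 pq_gt0. Qed.
Lemma pinv_lt1 : pq^-1 < 1. Proof. by rewrite invf_lt1 ?pq_gt0 ?pq_gt1. Qed.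
Lemma pinv_ge0 : 0 <= pq^-1. Proof. by rewrite invr_ge0 ltW ?pq_gt0. Qed.

Lemma abs0 : abs 0 = 0. Proof. by apply/(abs_eq0 HK). Qed.
Lemma abs1 : abs 1 = 1.
Proof.
have h := absM HK 1 1. rewrite mulr1 in h.
have nz : abs 1 != 0.
  by apply/eqP => /(abs_eq0 HK)/eqP; rewrite oner_eq0.
by apply: (mulfI nz); rewrite mulr1 -h.
Qed.
Lemma absN1 : abs (-1) = 1.
Proof.
have h := absM HK (-1) (-1). rewrite mulrNN mulr1 abs1 in h.
by apply/eqP; rewrite -(sqrp_eq1 (abs_ge0 HK _)) expr2 -h.
Qed.
Lemma absN x : abs (- x) = abs x.
Proof. by rewrite -mulN1r (absM HK) absN1 mul1r. Qed.
Lemma absB x y : abs (x - y) <= Num.max (abs x) (abs y).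
Proof. by rewrite -(absN y); apply: (abs_ultra HK). Qed.
Lemma absX x n : abs (x ^+ n) = abs x ^+ n.
Proof. by elim: n => [|n IH]; rewrite ?expr0 ?abs1 // !exprS (absM HK) IH. Qed.
Lemma absV x : abs (x^-1) = (abs x)^-1.
Proof.
have [->|nz] := eqVneq x 0; first by rewrite invr0 abs0 invr0.
have h : abs x * abs x^-1 = 1 by rewrite -(absM HK) divff // abs1.
have nzA : abs x != 0 by apply/eqP => /(abs_eq0 HK)/eqP; rewrite (negbTE nz).
by rewrite -[LHS](mulKf nzA) h mulr1.
Qed.
Lemma abs_le1_nat n : abs (n%:R : K) <= 1.
Proof.
elim: n => [|n IH]; first by rewrite abs0 ler01.
rewrite mulrS; apply: le_trans (abs_ultra HK _ _) _.
by rewrite ge_max abs1 lexx IH.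
Qed.
Lemma abs_sum (I : Type) (r : seq I) (P : pred I) (F : I -> K) b :
  0 <= b -> (forall i, P i -> abs (F i) <= b) ->
  abs (\sum_(i <- r | P i) F i) <= b.
Proof.
move=> b0 H; apply: (big_ind (fun x => abs x <= b)) => //.
- by rewrite abs0.
- move=> x y hx hy; apply: le_trans (abs_ultra HK x y) _.
  by rewrite ge_max hx hy.
Qed.
Lemma absMn x n : abs (x *+ n) <= abs x.
Proof. by rewrite -mulr_natr (absM HK) ler_piMr ?(abs_ge0 HK) ?abs_le1_nat. Qed.
Lemma absMn_dvd x n : (p %| n)%N -> abs (x *+ n) <= abs x * pq^-1.
Proof.
move/dvdnP => [k ->]; rewrite mulrnA -mulr_natr (absM HK) (abs_p HK).
by rewrite ler_wpM2r ?pinv_ge0 ?absMn.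
Qed.
Lemma abs_ultra_eq x y : abs y < abs x -> abs (x + y) = abs x.
Proof.
move=> hy; apply/eqP; rewrite eq_le; apply/andP; split.
  by apply: le_trans (abs_ultra HK _ _) _; rewrite ge_max lexx ltW.
have : abs x <= Num.max (abs (x + y)) (abs (- y)).
  by rewrite -{1}(addrK y x); apply: (abs_ultra HK).
rewrite absN le_max; case/orP => // h.
by move: h; rewrite leNgt hy.
Qed.
Lemma abs_mulp {z} : abs z <= 1 -> abs (z * p%:R) <= pq^-1.
Proof.
move=> hz; rewrite (absM HK) (abs_p HK) -{2}(mul1r pq^-1).
by rewrite ler_wpM2r ?pinv_ge0.
Qed.

Lemma pR_neq0 : (p%:R : K) != 0.
Proof.
apply/eqP => h; have := abs_p HK; rewrite h abs0 => /eqP.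
by rewrite eq_sym invr_eq0 (negbTE pq_neq0).
Qed.

Lemma fermat_unit {s} : ~~ (p %| s)%N -> exists w, (s ^ p.-1 = 1 + p * w)%N.
Proof.
move=> h.
have s0 : (0 < s)%N by case: s h => //; rewrite dvdn0.
have e : (s ^ p = s * s ^ p.-1)%N by rewrite -expnS prednK // prime_gt0.
have hle : (s <= s ^ p)%N by rewrite e leq_pmulr // expn_gt0 s0.
have hd : (p %| s ^ p - s)%N by rewrite -eqn_mod_dvd //; apply/eqP; apply: fermat_little.
have e' : (s ^ p - s = s * (s ^ p.-1 - 1))%N by rewrite mulnBr muln1 e.
move: hd; rewrite e' Euclid_dvdM // (negbTE h) /= => hd.
exists ((s ^ p.-1 - 1) %/ p)%N; rewrite mulnC divnK // subnKC //.
by rewrite expn_gt0 s0.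
Qed.

Lemma abs_nat_unit {s} : ~~ (p %| s)%N -> abs (s%:R : K) = 1.
Proof.
move=> /fermat_unit [w e].
have h : (s%:R : K) ^+ p.-1 = 1 + (w%:R * p%:R).
  by rewrite -natrX e natrD natrM mulrC.
have h2 : abs (s%:R : K) ^+ p.-1 = 1.
  rewrite -absX h abs_ultra_eq ?abs1 //.
  exact: le_lt_trans (abs_mulp (abs_le1_nat w)) pinv_lt1.
apply/eqP; rewrite -(pexpr_eq1 (n := p.-1)) ?h2 ?(abs_ge0 HK) //.
by rewrite -subn1 subn_gt0 p_gt1.
Qed.

Lemma abs_nat_dvd {s} : (p %| s)%N -> abs (s%:R : K) <= pq^-1.
Proof. by move/dvdnP => [k ->]; rewrite natrM abs_mulp ?abs_le1_nat. Qed.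

Lemma nat_neq0 n : (0 < n)%N -> (n%:R : K) != 0.
Proof.
elim/ltn_ind: n => n IH n0.
have [hd|hnd] := boolP (p %| n)%N; last first.
  by apply/eqP => h; move: (abs_nat_unit hnd); rewrite h abs0 => /eqP; rewrite eq_sym oner_eq0.
move/dvdnP: hd => [k ek]; rewrite ek natrM mulf_neq0 ?pR_neq0 //.
have k0 : (0 < k)%N by move: n0; rewrite ek muln_gt0 => /andP[].
apply: IH => //; rewrite ek -{1}(muln1 k) ltn_mul2l k0 p_gt1.
by []. Qed.

Lemma abs_intr (z : int) : abs (z%:~R : K) = abs ((`|z|%N)%:R).
Proof.
case: z => n; first by rewrite -pmulrn.
by rewrite NegzE mulrNz -pmulrn absN abszN absz_nat.
Qed.

Lemma approx_nat {x} : abs x <= 1 -> exists N : nat, abs (x - N%:R) <= pq^-1.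
Proof.
move=> hx.
have he : 0 < pq^-1 by rewrite invr_gt0 pq_gt0.
have [q hq] := Q_dense HK x he.
set y : K := ratr q in hq.
have hy : abs y <= 1.
  have -> : y = x - (x - y) by rewrite opprB addrC subrK.
  apply: le_trans (absB _ _) _; rewrite ge_max hx /=.
  exact: le_trans (ltW hq) (ltW pinv_lt1).
set r := numq q. set s := `|denq q|%N.
have s0 : (0 < s)%N by rewrite absz_gt0 denq_neq0.
have snz : (s%:R : K) != 0 by apply: nat_neq0.
have ey : y = r%:~R / s%:R.
  rewrite /y /ratr /s; congr (_ / _); rewrite pmulrn gtz0_abs // denq_gt0.
have ys : y * s%:R = r%:~R by rewrite ey divfK.
have sp : ~~ (p %| s)%N.
  apply/negP => hps.
  have hr : ~~ (p %| `|r|)%N.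
    have cop := coprime_num_den q; rewrite -/r -/s in cop.
    by rewrite -prime_coprime // coprime_sym (coprime_dvdr hps cop).
  have := abs_nat_unit hr; rewrite -abs_intr -ys (absM HK) => e1.
  have h2 := abs_nat_dvd hps.
  have : abs y * abs (s%:R : K) <= 1 * pq^-1.
    by apply: ler_pM => //; apply: (abs_ge0 HK).
  by rewrite e1 mul1r leNgt pinv_lt1.
have [w ew] := fermat_unit sp.
set R := `|(r %% p)%Z|%N.
have hR : Posz R = (r %% p)%Z by rewrite /R gez0_abs // modz_ge0 // eqz_nat gtn_eqF // prime_gt0.
have er : (r%:~R : K) = ((r %/ p)%Z)%:~R * p%:R + R%:R.
  by rewrite {1}(divz_eq r p) intrD intrM -hR !pmulrn.
have es : (s ^ p.-2 * s = 1 + p * w)%N.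
  by rewrite -expnSr -ew; congr (_ ^ _)%N; move: p_gt1; case: (p) => [|[|q']].
exists (R * s ^ p.-2)%N.
have hyN : (y - (R * s ^ p.-2)%N%:R) * s%:R
           = ((r %/ p)%Z)%:~R * p%:R - R%:R * w%:R * p%:R.
  rewrite mulrBl ys !natrM -mulrA -(natrM K (s ^ p.-2) s) es natrD natrM er; ring.
have hyN2 : abs (y - (R * s ^ p.-2)%N%:R) <= pq^-1.
  have := f_equal abs hyN; rewrite (absM HK) abs_nat_unit // mulr1 => ->.
  apply: le_trans (absB _ _) _; rewrite ge_max !abs_mulp //.
    by rewrite (absM HK); apply: le_trans (ler_piMr _ (abs_le1_nat w)) (abs_le1_nat R); apply: (abs_ge0 HK).
  by rewrite abs_intr abs_le1_nat.
have -> : x - (R * s ^ p.-2)%N%:R = (x - y) + (y - (R * s ^ p.-2)%N%:R).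
  by rewrite addrA subrK.
apply: le_trans (abs_ultra HK _ _) _.
by rewrite ge_max hyN2 ltW.
Qed.

Lemma fermat_abs {x} : abs x <= 1 -> abs (x - x ^+ p) <= pq^-1.
Proof.
move=> hx; have [N hN] := approx_nat hx.
have hNp : abs ((N%:R : K) - N%:R ^+ p) <= pq^-1.
  rewrite -natrX {1}(divn_eq N p) (divn_eq (N ^ p) p).
  rewrite (fermat_little N Hp) !natrD !natrM.
  set a := (N %/ p)%N%:R; set b := (N ^ p %/ p)%N%:R; set c := (N %% p)%N%:R.
  have -> : a * p%:R + c - (b * p%:R + c) = (a - b) * p%:R by ring.
  apply: abs_mulp; apply: le_trans (absB _ _) _.
  by rewrite ge_max !abs_le1_nat.
have hX : abs ((N%:R : K) ^+ p - x ^+ p) <= pq^-1.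
  rewrite subrXX (absM HK) -opprB absN -[X in _ <= X]mulr1.
  apply: ler_pM => //; try apply: (abs_ge0 HK).
  apply: abs_sum => // i _; rewrite (absM HK) !absX -[X in _ <= X]mulr1.
  apply: ler_pM; rewrite ?exprn_ge0 ?(abs_ge0 HK) //; apply: exprn_ile1;
    rewrite ?(abs_ge0 HK) ?abs_le1_nat //.
have -> : x - x ^+ p = (x - N%:R) + ((N%:R - N%:R ^+ p) + (N%:R ^+ p - x ^+ p)).
  by ring.
apply: le_trans (abs_ultra HK _ _) _; rewrite ge_max hN /=.
apply: le_trans (abs_ultra HK _ _) _; by rewrite ge_max hNp hX.
Qed.

Definition B (z : int) : rat := pq ^ (- z).
Lemma B_gt0 z : 0 < B z. Proof. exact: exprz_gt0 pq_gt0. Qed.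
Lemma B_ge0 z : 0 <= B z. Proof. exact/ltW/B_gt0. Qed.
Lemma B_le z1 z2 : z1 <= z2 -> B z2 <= B z1.
Proof. by move=> h; rewrite /B ler_eXz2l ?pq_gt1 // lerN2. Qed.
Lemma B_lt z1 z2 : z1 < z2 -> B z2 < B z1.
Proof. by move=> h; rewrite /B ltr_eXz2l ?pq_gt1 // ltrN2. Qed.
Lemma B_add z1 z2 : B (z1 + z2) = B z1 * B z2.
Proof. by rewrite /B opprD expfzDr // pq_neq0. Qed.
Lemma B1 : B 1 = pq^-1. Proof. by rewrite /B exprN1. Qed.
Lemma BN1 : B (-1) = pq. Proof. by rewrite /B opprK expr1z. Qed.
Lemma B0 : B 0 = 1. Proof. by rewrite /B oppr0 expr0z. Qed.
Lemma B_nat n : abs ((p ^ n)%:R : K) = B n%:Z.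
Proof. by rewrite natrX absX (abs_p HK) exprVn exprnN. Qed.

Definition Wb (R : {poly K}) (m e : int) :=
  forall j : nat, abs (R`_j) <= B (m * j%:Z - e).

Lemma Wb_mul {A C m e1 e2} : Wb A m e1 -> Wb C m e2 -> Wb (A * C) m (e1 + e2).
Proof.
move=> hA hC j; rewrite coefM; apply: abs_sum; first exact: B_ge0.
move=> [i /=]; rewrite ltnS => hij _; rewrite (absM HK).
have -> : m * j%:Z - (e1 + e2) = (m * i%:Z - e1) + (m * (j - i)%N%:Z - e2).
  by rewrite -subzn //; ring.
by rewrite B_add; apply: ler_pM => //; apply: (abs_ge0 HK).
Qed.

Lemma Wb_1 m : Wb 1 m 0.
Proof.
move=> [|j]; rewrite coef1 /=; first by rewrite abs1 mulr0 subr0 B0.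
by rewrite abs0 B_ge0.
Qed.

Lemma Wb_exp {A m} i : Wb A m 0 -> Wb (A ^+ i) m 0.
Proof.
move=> hA; elim: i => [|i IH]; first by rewrite expr0; apply: Wb_1.
by rewrite exprS; have := Wb_mul hA IH; rewrite addr0.
Qed.

Lemma coef0X (R : {poly K}) n : (R ^+ n)`_0 = R`_0 ^+ n.
Proof.
elim: n => [|n IH]; first by rewrite !expr0 coef1.
by rewrite !exprS coef0M IH.
Qed.

Definition Inv (P : {poly K}) (m : int) :=
  [/\ abs P`_0 <= 1, abs P`_1 = B m &
      forall j, (1 <= j)%N -> abs P`_j <= B ((m + 1) * j%:Z - 1)].

Lemma step P m : Inv P m -> Inv (fermat_delta p P) (m - 1).
Proof.
case=> h0 h1 hj.
set c0 := P`_0.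
set Q := P - c0%:P.
have hQ0 : Q`_0 = 0 by rewrite coefB coefC eqxx subrr.
have hQj : forall j, (1 <= j)%N -> Q`_j = P`_j.
  by move=> [|j] // _; rewrite coefB coefC /= subr0.
have WQ : Wb Q m 0.
  move=> [|j]; first by rewrite hQ0 abs0 B_ge0.
  rewrite hQj //; apply: (le_trans (hj j.+1 isT)); apply: B_le. nia.
have hP : P = c0%:P + Q by rewrite /Q; ring.
have term : forall (i j : nat), (i <= p)%N -> (1 <= j)%N ->
  abs (((c0%:P) ^+ (p - i) * Q ^+ i *+ 'C(p, i))`_j) <= B (m * j%:Z) /\
  (j = 1%N -> abs (((c0%:P) ^+ (p - i) * Q ^+ i *+ 'C(p, i))`_j) <= B (m + 1)).
  move=> i j hip hj1.
  rewrite coefMn -polyC_exp coefCM.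
  have [->|i0] := eqVneq i 0%N.
    rewrite expr0 coef1; have -> : (j == 0%N) = false by case: (j) hj1.
    by rewrite mulr0 mul0rn abs0 !B_ge0.
  have [ip|ip] := eqVneq i p.
    rewrite ip subnn expr0 mul1r binn mulr1n; split.
      by have := Wb_exp p WQ j; rewrite subr0.
    move=> ->; have -> : (Q ^+ p)`_1 = 0.
      rewrite -(prednK (prime_gt0 Hp)) exprS coefM big_ord_recr /= big_ord1.
      rewrite hQ0 mul0r add0r /= coef0X hQ0 expr0n.
      have -> : (p.-1 == 0%N) = false by move: p_gt1; case: (p) => [|[|q']].
      by rewrite mulr0.
    by rewrite abs0 B_ge0.
  have hd : (p %| 'C(p, i))%N.
    by apply: prime_dvd_bin => //; rewrite lt0n i0 ltn_neqAle ip hip.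
  have hb : abs (c0 ^+ (p - i) * (Q ^+ i)`_j *+ 'C(p, i)) <= B (m * j%:Z + 1).
    apply: le_trans (absMn_dvd _ _ hd) _.
    rewrite B_add B1 ler_wpM2r ?pinv_ge0 // (absM HK) -[X in _ <= X]mul1r.
    apply: ler_pM; rewrite ?(abs_ge0 HK) //; last first.
      by have := Wb_exp i WQ j; rewrite subr0.
    by rewrite absX exprn_ile1 ?(abs_ge0 HK).
  split; first by apply: le_trans hb _; apply: B_le; rewrite lerDl.
  by move=> ej; move: hb; rewrite ej mulr1.
have coefP : forall j, (1 <= j)%N -> (P ^+ p)`_j =
    \sum_(i < p.+1) ((c0%:P) ^+ (p - i) * Q ^+ i *+ 'C(p, i))`_j.
  by move=> j _; rewrite {1}hP exprDn coef_sum.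
have bPj : forall j, (1 <= j)%N -> abs ((P ^+ p)`_j) <= B (m * j%:Z).
  move=> j hj1; rewrite coefP //; apply: abs_sum; first exact: B_ge0.
  move=> i _; have hi : (i <= p)%N by rewrite -ltnS ltn_ord.
  by case: (term i j hi hj1).
have bP1 : abs ((P ^+ p)`_1) <= B (m + 1).
  rewrite coefP //; apply: abs_sum; first exact: B_ge0.
  move=> i _; have hi : (i <= p)%N by rewrite -ltnS ltn_ord.
  by case: (term i 1%N hi isT) => _ ->.
have cD : forall j, abs ((fermat_delta p P)`_j) = pq * abs (P`_j - (P ^+ p)`_j).
  by move=> j; rewrite /fermat_delta coefZ coefB (absM HK) absV (abs_p HK) invrK.
split.
- rewrite cD coef0X -/c0.
  apply: le_trans (ler_wpM2l (ltW pq_gt0) (fermat_abs h0)) _.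
  by rewrite divff ?pq_neq0.
- rewrite cD abs_ultra_eq; last first.
    by rewrite absN h1; apply: le_lt_trans bP1 _; apply: B_lt; rewrite ltrDl.
  by rewrite h1 -BN1 -B_add addrC.
- move=> j hj1; rewrite cD subrK.
  have hb : abs (P`_j - (P ^+ p)`_j) <= B (m * j%:Z).
    apply: le_trans (absB _ _) _; rewrite ge_max bPj // andbT.
    apply: le_trans (hj _ hj1) _; apply: B_le; nia.
  apply: le_trans (ler_wpM2l (ltW pq_gt0) hb) _.
  by rewrite -BN1 -B_add addrC.
Qed.

Lemma base n a : abs a <= 1 -> Inv (a%:P + (p ^ n)%:R *: 'X) n%:Z.
Proof.
move=> ha; split.
- by rewrite coefD coefC coefZ coefX /= mulr0 addr0.
- by rewrite coefD coefC coefZ coefX /= mulr1 add0r B_nat.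
- move=> [|[|j]] // _.
    by rewrite coefD coefC coefZ coefX /= mulr1 add0r B_nat mulr1 addrK.
  by rewrite coefD coefC coefZ coefX /= mulr0 addr0 abs0 B_ge0.
Qed.

Lemma inv_all n k a : abs a <= 1 -> Inv (delta_iter p k n a) (n%:Z - k%:Z).
Proof.
move=> ha; elim: k => [|k IH]; first by rewrite subr0; apply: base.
have -> : n%:Z - k.+1%:Z = (n%:Z - k%:Z) - 1 by rewrite -addn1 PoszD; ring.
exact: step IH.
Qed.

End Proof.

Theorem lemma2p1 (p : nat) (K : fieldType) (abs : K -> rat)
    (Hp : prime p) (HK : is_Qp_model p K abs)
    (n k : nat) (a : K) (Ha : abs a <= 1) :
  let c := fun j : nat => (delta_iter p k n a)`_j in
  [/\ abs (c 0%N) <= 1,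
      abs (c 1%N) = (p%:Q) ^ (- (n%:Z - k%:Z)) &
      forall j : nat, (2 <= j <= p ^ k)%N ->
        abs (c j) <= (p%:Q) ^ (- ((n%:Z - k%:Z + 1) * j%:Z - 1))].
Proof.
move=> c; have [h0 h1 hj] := @inv_all p K abs Hp HK n k a Ha.
split => // j /andP[hj2 _]; apply: hj; exact: ltnW.
Qed.
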